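(* Let the branching factor satisfy $b>1$, let $\ell^*$ be the peak of the single-peaked sequence $\{\lambda_i\}$ and $\gamma>1$ a constant with $\sum_{j\ge i}\lambda_j\le\gamma\lambda_i$ for all $i\ge\ell^*+2$. Then for every $i$ with $\ell^*+1\le i\le h$, $x_i\le\gamma\,(h-i)$.
   Context: Galton–Watson branching process on an infinite $d$-ary tree (root at level $0$) with offspring distribution $D=\{c_j\}_{j=0}^d$, branching factor $b=\sum_j jc_j$; each non-root node independently holds an answer with probability $1/n$. Let $t(x)=\sum_jc_jx^j(1-\frac1n)^j$, $\phi_0=1$, $\phi_i=t(\phi_{i-1})$, $\lambda_i=\phi_{i-1}-\phi_i$. For $b>1$ the sequence $\{\lambda_i\}$ is single-peaked: there is a level $\ell^*$ with $\lambda_{i-1}\le\lambda_i$ for $i\le\ell^*$ and $\lambda_j>\lambda_{j+1}$ for $j\ge\ell^*$, and there is a constant $\gamma>1$ (independent of $n$) with $\sum_{j\ge i}\lambda_j\le\gamma\lambda_i$ for all $i\ge\ell^*+2$. For a level $h$, define $x_h=0$ and for $i\le h-1$, $x_i=\max_{i+1\le j\le h}\{x_j+\frac{j-i}{\lambda_{i+1}}\sum_{\ell=i+1}^h\lambda_\ell\}$ (the direct referral rewards of the DR mechanism). *)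

(* Defs.v *)
From HB Require Import structures.
From mathcomp Require Import all_boot all_order all_algebra.
From mathcomp Require Import all_classical all_reals all_analysis.
Set Implicit Arguments. Unset Strict Implicit. Unset Printing Implicit Defensive.
Import Order.TTheory GRing.Theory Num.Theory.
Local Open Scope ring_scope.

Section DR.
Variable R : realType.

Definition tgen (d n : nat) (c : nat -> R) (x : R) : R :=
  \sum_(j < d.+1) c j * x ^+ j * (1 - n%:R^-1) ^+ j.

Fixpoint phi (d n : nat) (c : nat -> R) (i : nat) : R :=
  match i with
  | 0 => 1
  | i'.+1 => tgen d n c (phi d n c i')
  end.

(* lambda_i = phi_{i-1} - phi_i  (meaningful for i >= 1; lambda_0 = 0) *)
Definition lam (d n : nat) (c : nat -> R) (i : nat) : R :=
  phi d n c i.-1 - phi d n c i.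

(* xlist lam h k = [:: x_h; x_{h-1}; ...; x_{h-k}]  (entry m is x_{h-m}),
   where x_h = 0 and for i <= h-1
   x_i = max_{i+1 <= j <= h} ( x_j + (j-i)/lam_{i+1} * sum_{l=i+1}^h lam_l ).
   In the recursive step i = h - k and j = h - m with m < k. *)
Fixpoint xlist (la : nat -> R) (h k : nat) : seq R :=
  match k with
  | 0 => [:: 0]
  | k'.+1 =>
      let s := xlist la h k' in
      let i := (h - k'.+1)%N in
      let S := \sum_(i.+1 <= l < h.+1) la l in
      let v := fun m : 'I_k'.+1 => s`_m + ((k'.+1 - m)%:R / la i.+1) * S in
      rcons s (\big[Num.max/v ord0]_(m < k'.+1) v m)
  end.

Definition xDR (la : nat -> R) (h i : nat) : R :=
  nth 0 (xlist la h (h - i)) (h - i).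

End DR.

(* Main.v *)
Require Import Defs.
From HB Require Import structures.
From mathcomp Require Import all_boot all_order all_algebra.
From mathcomp Require Import all_classical all_reals all_analysis.
From mathcomp Require Import zify.
From Stdlib Require Import Lia.
Import Order.TTheory GRing.Theory Num.Theory.
Local Open Scope ring_scope.

Section Aux.
Variable R : realType.

Lemma tgen_mono (d n : nat) (c : nat -> R) x y :
  (0 < n)%N -> (forall j, 0 <= c j) -> 0 <= x -> x <= y ->
  0 <= tgen d n c x /\ tgen d n c x <= tgen d n c y.
Proof.
move=> n0 c0 x0 xy.
have a0 : 0 <= 1 - n%:R^-1 :> R.
  rewrite subr_ge0 invf_le1 ?ler1n ?ltr0n //.
split.
  apply: sumr_ge0 => j _; apply: mulr_ge0; [apply: mulr_ge0|]; by rewrite ?exprn_ge0.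
apply: ler_sum => j _; apply: ler_wpM2r; first by rewrite exprn_ge0.
apply: ler_wpM2l => //; apply: lerXn2r => //; rewrite ?inE ?nnegrE //.
by apply: le_trans xy.
Qed.

Lemma tgen1 (d n : nat) (c : nat -> R) :
  (0 < n)%N -> (forall j, 0 <= c j) -> \sum_(j < d.+1) c j = 1 ->
  tgen d n c 1 <= 1.
Proof.
move=> n0 c0 s1; rewrite /tgen; rewrite -[X in _ <= X]s1; apply: ler_sum => j _.
rewrite expr1n mulr1 -[leRHS]mulr1; apply: ler_wpM2l => //.
apply: exprn_ile1.
  rewrite subr_ge0 invf_le1 ?ler1n ?ltr0n //.
by rewrite lerBlDr lerDl invr_ge0.
Qed.

Lemma phi_props (d n : nat) (c : nat -> R) :
  (0 < n)%N -> (forall j, 0 <= c j) -> \sum_(j < d.+1) c j = 1 ->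
  forall i, 0 <= phi d n c i.+1 /\ phi d n c i.+1 <= phi d n c i.
Proof.
move=> n0 c0 s1; elim=> [|i [IH1 IH2]] /=.
  have [h1 _] := tgen_mono d n c 1 1 n0 c0 ler01 (lexx 1).
  by split => //; apply: tgen1.
have [h1 h2] := tgen_mono d n c _ _ n0 c0 IH1 IH2.
by split.
Qed.

Lemma lam_ge0 (d n : nat) (c : nat -> R) :
  (0 < n)%N -> (forall j, 0 <= c j) -> \sum_(j < d.+1) c j = 1 ->
  forall l, 0 <= lam d n c l.
Proof.
move=> n0 c0 s1 [|l]; rewrite /lam /=; first by rewrite subrr.
have [_ h] := phi_props d n c n0 c0 s1 l.
by rewrite subr_ge0.
Qed.

Lemma size_xlist (la : nat -> R) h k : size (xlist la h k) = k.+1.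
Proof. by elim: k => //= k IH; rewrite size_rcons IH. Qed.

End Aux.

Theorem proposition5p3 (R : realType) (d n : nat) (c : nat -> R) :
  (0 < n)%N ->
  (forall j, 0 <= c j) ->
  \sum_(j < d.+1) c j = 1 ->
  1 < \sum_(j < d.+1) j%:R * c j ->
  forall (lstar : nat) (gamma : R),
  (forall i, (2 <= i <= lstar)%N -> lam d n c i.-1 <= lam d n c i) ->
  (forall j, (lstar <= j)%N -> lam d n c j.+1 < lam d n c j) ->
  1 < gamma ->
  (forall i, (lstar.+2 <= i)%N ->
     (\sum_(i <= j <oo) (lam d n c j)%:E <= (gamma * lam d n c i)%:E)%E) ->
  forall h i, (lstar.+1 <= i <= h)%N ->
  xDR (lam d n c) h i <= gamma * (h - i)%:R.
Proof.
move=> n0 c0 s1 _ lstar gamma _ _ g1 Hser h i /andP[li ih].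
set la := lam d n c.
have la0 : forall l, 0 <= la l by exact: (lam_ge0 R d n c n0 c0 s1).
have g0 : 0 <= gamma by apply: ltW; apply: lt_trans g1; apply: ltr01.
have HS : forall i', (lstar.+2 <= i')%N ->
    \sum_(i' <= l < h.+1) la l <= gamma * la i'.
  move=> i' hi'; have := Hser i' hi'.
  have := @nneseries_lim_ge R (fun j => (la j)%:E) xpredT i' h.+1.
  move=> /(_ (fun m _ _ => la0 m)) H1 H2.
  rewrite -lee_fin -sumEFin; exact: le_trans H1 H2.
suff main : forall k, (k <= h - lstar.+1)%N ->
    forall m, (m <= k)%N -> nth 0 (xlist la h k) m <= gamma * m%:R.
  rewrite /xDR; apply: main => //; exact: leq_sub2l.
elim=> [|k IH] hk m hm.
  by move: hm; rewrite leqn0 => /eqP ->; rewrite /= mulr0.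
rewrite /= nth_rcons size_xlist.
case: ltnP => hmk.
  by apply: IH; [exact: ltnW hk|rewrite -ltnS].
have -> : m = k.+1 by apply/eqP; rewrite eqn_leq hm hmk.
rewrite eqxx.
set i0 := (h - k.+1)%N.
have hi0 : (lstar.+2 <= i0.+1)%N by rewrite /i0; clear -hk; lia.
have hS := HS i0.+1 hi0.
have Hv : forall m' : 'I_k.+1,
   nth 0 (xlist la h k) m' + (((k.+1 - m')%:R / la i0.+1) *
     \sum_(i0.+1 <= l < h.+1) la l) <= gamma * (k.+1)%:R.
  move=> m'.
  have hm' : (m' <= k)%N by rewrite -ltnS.
  have h1 := IH (ltnW hk) _ hm'.
  have h2 : ((k.+1 - m')%:R / la i0.+1) * \sum_(i0.+1 <= l < h.+1) la l
             <= gamma * (k.+1 - m')%:R.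
    have [z|pos] := eqVneq (la i0.+1) 0.
      by rewrite z invr0 mulr0 mul0r; apply: mulr_ge0.
    have lp : 0 < la i0.+1 by rewrite lt0r pos la0.
    rewrite mulrAC -mulrA [gamma * _]mulrC; apply: ler_wpM2l => //.
    by rewrite ler_pdivrMr.
  have := lerD h1 h2; rewrite natrB ?(ltnW (ltn_ord m')) // mulrBr.
  by rewrite addrCA subrr addr0.
elim/big_ind: _ => [|x y hx hy|m' _].
- exact: (Hv ord0).
- by rewrite ge_max hx hy.
- exact: Hv.
Qed.
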